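(* Let $\mathcal{I}$ be a countable nonempty set of database instances, $\mathcal{L}$ a query language, and $p$ an answer-dependent pricing function. The following two statements are equivalent: (1) $p$ has no information arbitrage; (2) there is a set function $f$, defined on subsets of $\mathcal{I}$ and taking nonnegative real values, such that $p(\mathbf{Q},E)=f(\overline{\mathcal{S}}_{\mathbf{Q}}(E))$ for every query bundle $\mathbf{Q}\in B(\mathcal{L})$ and every $E\in\{\mathbf{Q}(D):D\in\mathcal{I}\}$, and $f$ is monotone over every semilattice $\mathcal{S}^{\mathcal{L}}_D$, $D\in\mathcal{I}$.
   Context: A query is a deterministic function on $\mathcal{I}$. A query bundle $\mathbf{Q}=(Q_1,\dots,Q_n)$ is a finite tuple of queries from $\mathcal{L}$, with $\mathbf{Q}(D)=(Q_1(D),\dots,Q_n(D))$; $B(\mathcal{L})$ is the set of all finite query bundles, and for $\mathbf{Q}_1,\mathbf{Q}_2\in B(\mathcal{L})$ their union (concatenation) $\mathbf{Q}_1,\mathbf{Q}_2$ is again in $B(\mathcal{L})$. An answer-dependent pricing function assigns a price $p(\mathbf{Q},E)\ge 0$ to each $\mathbf{Q}\in B(\mathcal{L})$ and each $E\in\{\mathbf{Q}(D):D\in\mathcal{I}\}$. For $D\in\mathcal{I}$ write $D\vdash \mathbf{Q}_2\twoheadrightarrow\mathbf{Q}_1$ if for every $D'\in\mathcal{I}$ with $\mathbf{Q}_2(D')=\mathbf{Q}_2(D)$ we have $\mathbf{Q}_1(D')=\mathbf{Q}_1(D)$. $p$ has no information arbitrage if for every $D\in\mathcal{I}$ and all $\mathbf{Q}_1,\mathbf{Q}_2\in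 B(\mathcal{L})$, $D\vdash \mathbf{Q}_2\twoheadrightarrow\mathbf{Q}_1$ implies $p(\mathbf{Q}_2,\mathbf{Q}_2(D))\ge p(\mathbf{Q}_1,\mathbf{Q}_1(D))$. The conflict set is $\overline{\mathcal{S}}_{\mathbf{Q}}(E)=\{D'\in\mathcal{I}:\mathbf{Q}(D')\neq E\}$. For $D\in\mathcal{I}$, $\mathcal{S}^{\mathcal{L}}_D=\{\overline{\mathcal{S}}_{\mathbf{Q}}(\mathbf{Q}(D)):\mathbf{Q}\in B(\mathcal{L})\}$, partially ordered by inclusion (a join-semilattice with join $\cup$). $f$ is monotone over $\mathcal{S}^{\mathcal{L}}_D$ if $A\subseteq B$ with $A,B\in\mathcal{S}^{\mathcal{L}}_D$ implies $f(A)\le f(B)$. *)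

(* Defs.v *)
From mathcomp Require Import all_boot.
From Stdlib Require Import Reals List.
Open Scope R_scope.

Set Implicit Arguments.
Section Pricing.
Variables (I : Type) (A : Type).

Definition query := I -> A.
Definition bundle := list query.

Definition in_bundles (L : query -> Prop) (Q : bundle) : Prop :=
  forall q, List.In q Q -> L q.

Definition eval (Q : bundle) (D : I) : list A := List.map (fun q => q D) Q.

Definition valid_answer (Q : bundle) (E : list A) : Prop :=
  exists D, eval Q D = E.

Definition determines (D : I) (Q2 Q1 : bundle) : Prop :=
  forall D', eval Q2 D' = eval Q2 D -> eval Q1 D' = eval Q1 D.

Definition pricing_function (L : query -> Prop) (p : bundle -> list A -> R) : Prop :=
  forall Q E, in_bundles L Q -> valid_answer Q E -> 0 <= p Q E.

Definition no_information_arbitrage (L : query -> Prop)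
  (p : bundle -> list A -> R) : Prop :=
  forall D Q1 Q2, in_bundles L Q1 -> in_bundles L Q2 ->
    determines D Q2 Q1 -> p Q1 (eval Q1 D) <= p Q2 (eval Q2 D).

Definition conflict_set (Q : bundle) (E : list A) : I -> Prop :=
  fun D' => eval Q D' <> E.

Definition in_semilattice (L : query -> Prop) (D : I) (S : I -> Prop) : Prop :=
  exists Q, in_bundles L Q /\ S = conflict_set Q (eval Q D).

Definition monotone_over (L : query -> Prop) (D : I) (f : (I -> Prop) -> R) : Prop :=
  forall S1 S2, in_semilattice L D S1 -> in_semilattice L D S2 ->
    (forall x, S1 x -> S2 x) -> f S1 <= f S2.

End Pricing.
Arguments in_bundles {I A}.
Arguments valid_answer {I A}.
Arguments conflict_set {I A}.
Arguments eval {I A}.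
Arguments determines {I A}.

(* Main.v *)
Require Import Defs.
From mathcomp Require Import all_boot.
From Stdlib Require Import Reals List Classical ClassicalEpsilon.
Open Scope R_scope.

Lemma key (I : Type) (A : Type) (L : query I A -> Prop)
  (p : bundle I A -> list A -> R) Q1 Q2 D1 D2 :
  no_information_arbitrage L p -> in_bundles L Q1 -> in_bundles L Q2 ->
  (forall x, conflict_set Q1 (eval Q1 D1) x -> conflict_set Q2 (eval Q2 D2) x) ->
  p Q1 (eval Q1 D1) <= p Q2 (eval Q2 D2).
Proof.
  move=> H h1 h2 Hs.
  have E : eval Q1 D2 = eval Q1 D1.
  { apply: NNPP => Hn. exact: (Hs D2 Hn). }
  rewrite -E. apply: H => // D' HD'.
  rewrite E. apply: NNPP => Hn. apply: (Hs D' Hn). exact HD'.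
Qed.
Arguments key {I A L p Q1 Q2 D1 D2}.

Theorem theorem1 (I : countType) (A : Type) (L : query I A -> Prop)
  (p : bundle I A -> list A -> R) :
  inhabited I ->
  pricing_function L p ->
  (no_information_arbitrage L p <->
   exists f : (I -> Prop) -> R,
     (forall S, 0 <= f S) /\
     (forall Q E, in_bundles L Q -> valid_answer Q E ->
        p Q E = f (conflict_set Q E)) /\
     (forall D : I, monotone_over L D f)).
Proof.
  move=> _ Hp; split.
  - move=> H.
    pose P S := fun QD : bundle I A * I =>
      in_bundles L QD.1 /\ S = conflict_set QD.1 (eval QD.1 QD.2).
    pose f S := match excluded_middle_informative (exists QD, P S QD) with
                | left e => let QD := proj1_sig (constructive_indefinite_description _ e)
                            in p QD.1 (eval QD.1 QD.2)
                | right _ => 0 end.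
    have Hf : forall Q D, in_bundles L Q ->
        f (conflict_set Q (eval Q D)) = p Q (eval Q D).
    { move=> Q D hQ. rewrite /f.
      case: excluded_middle_informative => [e|n].
      - case: (constructive_indefinite_description _ e) => [[Q' D'] [h1 h2]] /=.
        simpl in h1, h2.
        apply: Rle_antisym; [apply: (key H h1 hQ) | apply: (key H hQ h1)]; by rewrite h2.
      - exfalso; apply: n; exists (Q, D); split => //. }
    exists f; split; [|split].
    + move=> S; rewrite /f; case: excluded_middle_informative => [e|n]; last by apply: Rle_refl.
      case: (constructive_indefinite_description _ e) => [[Q' D'] [h1 h2]] /=.
      apply: Hp => //. by exists D'.
    + move=> Q E hQ [D <-]. by rewrite Hf.
    + move=> D S1 S2 [Q1 [h1 ->]] [Q2 [h2 ->]] Hs.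
      rewrite !Hf //. exact: (key H h1 h2).
  - move=> [f [_ [Hf Hm]]] D Q1 Q2 h1 h2 Hd.
    rewrite (Hf Q1) ?(Hf Q2) //; try by exists D.
    apply: (Hm D); [exists Q1; by split|exists Q2; by split|].
    move=> x Hx Heq. apply: Hx. exact: Hd.
Qed.
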